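(* For a squarefree integer $d$, the curve $H^d: d y^2=(x^2-x-3)(x^2+2x-12)$ is everywhere locally solvable (has points over $\mathbb{R}$ and over $\mathbb{Q}_p$ for every prime $p$) if and only if every prime $p\mid d$ satisfies $(\tfrac{p}{13})=1$ or $p=13$.
   Context: $(\tfrac{p}{13})$ is the Legendre symbol. Local solvability refers to the smooth projective model of the genus one curve $d y^2=(x^2-x-3)(x^2+2x-12)$. *)

(* Defs.v *)
From mathcomp Require Import all_boot all_order all_algebra.
From mathcomp Require Import reals.
Set Implicit Arguments. Unset Strict Implicit. Unset Printing Implicit Defensive.
Import Order.TTheory GRing.Theory Num.Theory.
Local Open Scope ring_scope.

Definition quartF (R : comNzRingType) (X Z : R) : R :=
  (X ^+ 2 - X * Z - 3 * Z ^+ 2) * (X ^+ 2 + 2 * X * Z - 12 * Z ^+ 2).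

Definition squarefree_int (d : int) : Prop :=
  d != 0 /\ forall p : nat, prime p -> ~~ (((p ^ 2)%N)%:Z %| d)%Z.

Definition legendre (a : int) (q : nat) : int :=
  if (q%:Z %| a)%Z then 0
  else if [exists x : 'I_q, ((x%:Z) ^+ 2 == a %[mod q%:Z])%Z] then 1 else -1.

(* p-adic integers Z_p, as the inverse limit of Z/p^k Z: compatible sequences
   of integer residues a k (mod p^k).  Two sequences represent the same
   p-adic integer iff they agree mod p^k for every k. *)
Definition padic_int (p : nat) : Type :=
  {a : nat -> int | forall k : nat, (a k.+1 = a k %[mod ((p ^ k)%N)%:Z])%Z}.

(* Smooth projective model of  d y^2 = F(x,1): the curve
   d Y^2 = F(X,Z) in the weighted projective plane P(1,2,1).
   Real points: (X:Y:Z) with (X,Z) <> (0,0). *)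
Definition has_real_point (d : int) : Prop :=
  forall R : realType, exists X Y Z : R,
    (X != 0 \/ Z != 0) /\ d%:~R * Y ^+ 2 = quartF X Z.

(* Q_p-points: every Q_p-point of the weighted projective model can be scaled
   to (X:Y:Z) with X, Y, Z in Z_p and not both X, Z in pZ_p (d squarefree);
   conversely such a triple is a Q_p-point.  The equation d Y^2 = F(X,Z)
   holds in Z_p iff it holds modulo p^k for all k. *)
Definition has_Qp_point (d : int) (p : nat) : Prop :=
  exists X Y Z : padic_int p,
    ~~ ((p%:Z %| sval X 1%N)%Z && (p%:Z %| sval Z 1%N)%Z) /\
    forall k : nat,
      (d * sval Y k ^+ 2 = quartF (sval X k) (sval Z k) %[mod ((p ^ k)%N)%:Z])%Z.

Definition everywhere_locally_solvable (d : int) : Prop :=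
  has_real_point d /\ forall p : nat, prime p -> has_Qp_point d p.

(* Main.v *)
Require Import Defs.
From mathcomp Require Import all_boot all_order all_algebra.
From mathcomp Require Import reals.
From mathcomp Require Import all_fingroup all_solvable all_field.
From mathcomp Require Import zify ring.
From Stdlib Require Import ClassicalEpsilon.
Import Order.TTheory GRing.Theory Num.Theory.
Local Open Scope ring_scope.
Set Implicit Arguments. Unset Strict Implicit. Unset Printing Implicit Defensive.


Definition chi13 (n : nat) : int :=
  nth 0 [:: 0; 1; -1; 1; 1; -1; -1; -1; -1; 1; 1; -1; 1] (n %% 13).

Definition G13 (R : comNzRingType) (z : R) : R :=
  z - z^+2 + z^+3 + z^+4 - z^+5 - z^+6 - z^+7 - z^+8 + z^+9 + z^+10 - z^+11 + z^+12.

Section Gauss.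
Variable F : fieldType.
Variable z : F.
Hypothesis z13 : z ^+ 13 = 1.
Hypothesis z1 : z != 1.

Lemma zS13 n : z ^+ n.+4.+4.+4.+1 = z ^+ n.
Proof. by rewrite -[n.+4.+4.+4.+1]/(13 + n)%N exprD z13 mul1r. Qed.

Lemma zmod n : z ^+ n = z ^+ (n %% 13).
Proof. by rewrite {1}(divn_eq n 13) exprD mulnC exprM z13 expr1n mul1r. Qed.

Lemma N13 : 1 + z + z^+2 + z^+3 + z^+4 + z^+5 + z^+6 + z^+7 + z^+8 + z^+9 + z^+10 + z^+11 + z^+12 = 0.
Proof.
have h : (z - 1) * (1 + z + z^+2 + z^+3 + z^+4 + z^+5 + z^+6 + z^+7 + z^+8 + z^+9 + z^+10 + z^+11 + z^+12) = z^+13 - 1 by ring.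
move: h; rewrite z13 subrr => /eqP; rewrite mulf_eq0 subr_eq0 (negbTE z1) /=.
by move/eqP.
Qed.

Lemma G13_sq : G13 z ^+ 2 = 13.
Proof.
have h : G13 z ^+ 2 = 13 - (1 + z + z^+2 + z^+3 + z^+4 + z^+5 + z^+6 + z^+7 + z^+8 + z^+9 + z^+10 + z^+11 + z^+12)
  + (z^+13 - 1) * (12 - z - 2 * z^+2 + z^+3 - 4 * z^+4 - z^+5 + 2 * z^+6 - 3 * z^+7 + 3 * z^+9 - 2 * z^+10 + z^+11).
  rewrite /G13; ring.
by rewrite h N13 z13 subrr mul0r addr0 subr0.
Qed.

Lemma G13_pow r : (0 < r < 13)%N -> G13 (z ^+ r) = (chi13 r)%:~R * G13 z.
Proof.
case: r => // r; do 12! (case: r => [_|r]; [rewrite /G13 -!exprM !mulnE /= ?zS13 /chi13 /=; ring|]).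
by [].
Qed.

Lemma gauss13_aux (p : nat) : prime p -> p \in [pchar F] -> p != 13%N -> odd p ->
  (13:F)^+(p./2) = (chi13 p)%:~R.
Proof.
move=> pp charp p13 podd.
have r0 : (0 < p %% 13 < 13)%N.
  rewrite ltn_mod andbT lt0n; apply: contra p13 => /eqP h.
  have : (13 %| p)%N by rewrite /dvdn h.
  by rewrite dvdn_prime2 // eq_sym.
have Fr : G13 z ^+ p = G13 (z ^+ p).
  rewrite -(pFrobenius_autE charp) /G13 !(rmorphD, rmorphN, rmorphXn) /=.
  by rewrite !pFrobenius_autE.
have chim : chi13 p = chi13 (p %% 13) by rewrite /chi13 modn_mod.
rewrite zmod G13_pow // -chim in Fr.
have Gn0 : G13 z != 0.
  apply/negP => /eqP h; have := G13_sq; rewrite h expr0n /= => /eqP.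
  by rewrite eq_sym -(dvdn_pcharf charp 13) dvdn_prime2 // (negbTE p13).
move: Fr; rewrite -{1}(odd_double_half p) podd exprD expr1 -mul2n exprM G13_sq.
rewrite mulrC => /eqP; rewrite -subr_eq0 -mulrBl mulf_eq0 (negbTE Gn0) orbF subr_eq0.
by move/eqP.

Qed.
End Gauss.

Lemma fermat13 p : ~~ (13 %| p)%N -> (13 %| (p ^ 12).-1)%N.
Proof.
move=> h.
have cop : coprime p 13 by rewrite coprime_sym prime_coprime.
have e := Euler_exp_totient cop; rewrite totient_prime // in e.
have pos : (0 < p ^ 12)%N.
  rewrite expn_gt0; apply/orP; left; rewrite lt0n; by apply: contra h => /eqP ->.
by rewrite -subn1 -eqn_mod_dvd // e.
Qed.


Lemma root13 (p : nat) : prime p -> p != 13%N ->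
  {F : finFieldType & {z : F | p \in [pchar F] /\ z ^+ 13 = 1 /\ z != 1}}.
Proof.
move=> pp p13.
have [F charF cardF] := @pPrimePowerField p 12 pp (isT : (0 < 12)%N).
have h13 : (13 %| #|[set: {unit F}]|)%N.
  rewrite card_finField_unit cardF; apply: fermat13.
  by rewrite dvdn_prime2 // eq_sym.
have [x _ ox] := Cauchy (isT : prime 13) h13.
exists F, (val x); split=> //; split.
  by rewrite -FinRing.val_unitX -ox expg_order FinRing.val_unit1.
apply/negP => /eqP h.
have : x = 1%g by apply: val_inj; rewrite h FinRing.val_unit1.
by move=> e; move: ox; rewrite e order1.
Qed.


Section Euler.
Variable F : finFieldType.
Hypothesis Fodd : odd #|F|.
Local Notation h := (#|F|./2).

Lemma card2h : #|F|.-1 = (h * 2)%N.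
Proof. by rewrite -{1}(odd_double_half #|F|) Fodd add1n /= muln2. Qed.

Lemma fermatF (s : F) : s != 0 -> s ^+ (#|F|.-1) = 1.
Proof.
move=> s0; have e := expf_card s.
rewrite -(ltn_predK (finNzRing_gt1 F)) exprS in e.
by apply: (mulfI s0); rewrite mulr1 e.
Qed.

Lemma euler_sq (a : F) : a != 0 -> (exists s, s ^+ 2 = a) -> a ^+ h = 1.
Proof.
move=> a0 [s hs]; have s0 : s != 0 by apply: contraNneq a0 => e; rewrite -hs e expr0n.
by rewrite -hs -exprM mulnC -card2h fermatF.
Qed.

Lemma euler_pm (a : F) : a != 0 -> a ^+ h = 1 \/ a ^+ h = -1.
Proof.
move=> a0; have : (a ^+ h - 1) * (a ^+ h + 1) = 0.
  by rewrite -subr_sqr expr1n -exprM -card2h fermatF // subrr.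
move/eqP; rewrite mulf_eq0 subr_eq0 addr_eq0 => /orP[] /eqP; tauto.
Qed.

Lemma euler_hard (a : F) : a != 0 -> a ^+ h = 1 -> exists s, s ^+ 2 = a.
Proof.
move=> a0 ah.
have /cyclicP[u defU] := field_unit_group_cyclic [set: {unit F}]%G.
pose ua := finField_unit a0.
have : ua \in <[u]>%g by rewrite -defU inE.
case/cycleP => i ei.
have ou : #[u]%g = (h * 2)%N by rewrite /order -defU card_finField_unit card2h.
have : (ua ^+ h)%g == 1%g.
  by apply/eqP/val_inj; rewrite FinRing.val_unitX /= ah.
rewrite ei -expgM -order_dvdn ou mulnC.
have hpos : (0 < h)%N.
  have := finNzRing_gt1 F; rewrite -{1}(odd_double_half #|F|) Fodd.
  by case: (#|F|./2).
rewrite dvdn_pmul2r // => /dvdnP[j ej].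
exists (val (u ^+ j)%g); rewrite -FinRing.val_unitX -expgM -ej -ei.
by [].
Qed.


End Euler.

Lemma chi13_vals n : chi13 n = 0 \/ chi13 n = 1 \/ chi13 n = -1.
Proof.
rewrite /chi13; have : (n %% 13 < 13)%N by rewrite ltn_mod.
move: (n %% 13)%N => r.
by do 13! (case: r => [_|r]; [rewrite /=; tauto|]).
Qed.

Lemma qr13_Fp p : prime p -> p != 13%N -> odd p ->
  (13 : 'F_p) ^+ (p./2) = (chi13 p)%:~R.
Proof.
move=> pp p13 podd.
have [F [z [charF [z13 z1]]]] := root13 pp p13.
have e := gauss13_aux z13 z1 pp charF p13 podd.
have : (p %| 13 ^+ (p./2) - chi13 p)%Z.
  by rewrite (dvdz_pcharf charF) rmorphB rmorphXn /= e subrr.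
rewrite (dvdz_pcharf (pchar_Fp pp)) rmorphB rmorphXn /= subr_eq0 => /eqP.
by [].
Qed.

Lemma Fp_odd p : prime p -> odd p -> odd #|'F_p|.
Proof. by move=> pp; rewrite card_Fp. Qed.

Lemma sq13_iff p : prime p -> p != 13%N -> odd p ->
  (exists s : 'F_p, s ^+ 2 = 13) <-> chi13 p = 1.
Proof.
move=> pp p13 podd.
have Fo := Fp_odd pp podd.
have h13 : (13 : 'F_p) != 0.
  by rewrite -(dvdn_pcharf (pchar_Fp pp) 13) dvdn_prime2 // (negbTE p13).
have e := qr13_Fp pp p13 podd.
split => [hs|hc].
  have := euler_sq Fo h13 hs; rewrite card_Fp // e => /eqP.
  rewrite -subr_eq0 -[1]/(1%:~R) -rmorphB /= -(dvdz_pcharf (pchar_Fp pp)).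
  case: (chi13_vals p) => [->|[->|->]] //; rewrite dvdzE /=.
    by rewrite dvdn1 => /eqP p1; move: pp; rewrite p1.
  by rewrite dvdn_prime2 // => /eqP p2; move: podd; rewrite p2.
apply: euler_hard => //.
by rewrite card_Fp // e hc.
Qed.


Section SeqBuild.
Variables (P : nat -> int -> Prop) (R : nat -> int -> int -> Prop) (y0 : int).
Hypothesis P0 : P 0 y0.
Hypothesis step : forall k y, P k y -> exists y', P k.+1 y' /\ R k y y'.

Definition stepf k (s : {y | P k y}) : {y' | P k.+1 y' /\ R k (sval s) y'} :=
  constructive_indefinite_description _ (step (proj2_sig s)).

Fixpoint seqf k : {y | P k y} :=
  match k with
  | 0 => exist _ y0 P0
  | k'.+1 => let s := stepf (seqf k') in exist _ (sval s) (proj1 (proj2_sig s))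
  end.

Lemma seq_build : exists a : nat -> int, forall k, P k (a k) /\ R k (a k) (a k.+1).
Proof.
exists (fun k => sval (seqf k)) => k; split; first exact: proj2_sig.
by rewrite /=; exact: (proj2 (proj2_sig (stepf (seqf k)))).
Qed.
End SeqBuild.

Lemma PoszXn (p k : nat) : ((p ^ k)%N)%:Z = p%:Z ^+ k.
Proof. by rewrite -!natz natrX. Qed.

Lemma hensel (p : nat) (A B C y0 : int) : prime p ->
  (p%:Z %| A * y0 ^+ 2 + B * y0 + C)%Z -> ~~ (p%:Z %| 2 * A * y0 + B)%Z ->
  exists a : nat -> int, forall k,
    ((p%:Z ^+ k.+1 %| A * a k ^+ 2 + B * a k + C)%Z /\ (p%:Z %| a k - y0)%Z) /\
    (p%:Z ^+ k.+1 %| a k.+1 - a k)%Z.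
Proof.
move=> pp h0 hd.
set P := p%:Z.
apply: (seq_build (P := fun k y => (P ^+ k.+1 %| A * y ^+ 2 + B * y + C)%Z /\ (P %| y - y0)%Z)
                  (R := fun k y y' => (P ^+ k.+1 %| y' - y)%Z) (y0 := y0)).
  by rewrite subrr dvdz0 expr1.
move=> k y [/dvdzP[c hc] hy].
set D := 2 * A * y + B.
have hD : ~~ (P %| D)%Z.
  apply: contra hd => hD.
  have -> : 2 * A * y0 + B = D - 2 * A * (y - y0) by rewrite /D; ring.
  by apply: rpredB => //; apply: dvdz_mull.
have cop : coprimez P D by rewrite coprimezE prime_coprime // -dvdzE.
have [u [v huv]] := Bezoutz P D; rewrite (eqP cop) in huv.
set q := P ^+ k.
have em : P ^+ k.+1 = P * q by rewrite exprS.
rewrite em in hc *.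
set t := - c * v.
exists (y + t * (P * q)); split; [split|].
- apply/dvdzP; exists (c * u + A * t ^+ 2 * q).
  rewrite [P ^+ k.+2]exprS em; apply/eqP; rewrite -subr_eq0.
  have -> : A * (y + t * (P * q)) ^+ 2 + B * (y + t * (P * q)) + C -
     (c * u + A * t ^+ 2 * q) * (P * (P * q)) =
     (A * y ^+ 2 + B * y + C - c * (P * q)) - c * (P * q) * (u * P + v * D - 1).
    by rewrite /t /D; ring.
  by rewrite hc huv !subrr mulr0 subrr.
- have -> : y + t * (P * q) - y0 = (y - y0) + t * q * P by ring.
  by apply: rpredD => //; apply: dvdz_mull; apply: dvdzz.
- have -> : y + t * (P * q) - y = t * (P * q) by ring.
  by apply: dvdz_mull; apply: dvdzz.
Qed.


Lemma odd_mul (x y : int) : ~~ (2 %| x)%Z -> ~~ (2 %| y)%Z -> ~~ (2 %| x * y)%Z.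
Proof. by rewrite !dvdzE abszM Euclid_dvdM // => /negbTE-> /negbTE->. Qed.

Lemma hensel2 (A B : int) : ~~ (2 %| A)%Z -> (8 %| A - B)%Z ->
  exists a : nat -> int, forall k,
   ((2 ^+ k.+3 %| A * a k ^+ 2 - B)%Z /\ ~~ (2 %| a k)%Z) /\ (2 ^+ k.+2 %| a k.+1 - a k)%Z.
Proof.
move=> hA hAB.
apply: (seq_build (P := fun k y => (2 ^+ k.+3 %| A * y ^+ 2 - B)%Z /\ ~~ (2 %| y)%Z)
                  (R := fun k y y' => (2 ^+ k.+2 %| y' - y)%Z) (y0 := 1)).
  by rewrite expr1n mulr1; split => //; lia.
move=> k y [/dvdzP[c hc] hy].
have /dvdzP[e he] : (2 %| 1 + A * y)%Z.
  by have := odd_mul hA hy; lia.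
set q : int := 2 ^+ k.
have e3 : (2 : int) ^+ k.+3 = 8 * q by rewrite !exprS /q; ring.
have e2 : (2 : int) ^+ k.+2 = 4 * q by rewrite !exprS /q; ring.
have e4 : (2 : int) ^+ k.+4 = 16 * q by rewrite !exprS /q; ring.
rewrite e3 in hc.
exists (y + c * (4 * q)); split; [split|].
- apply/dvdzP; exists (c * e + A * c ^+ 2 * q).
  rewrite e4; apply/eqP; rewrite -subr_eq0.
  have -> : A * (y + c * (4 * q)) ^+ 2 - B - (c * e + A * c ^+ 2 * q) * (16 * q) =
     (A * y ^+ 2 - B - c * (8 * q)) + 8 * c * q * (1 + A * y - e * 2) by ring.
  by rewrite hc he !subrr mulr0 addr0.
- apply: contra hy => h.
  have -> : y = (y + c * (4 * q)) - 2 * (2 * c * q) by ring.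
  by apply: rpredB => //; apply: dvdz_mulr; apply: dvdzz.
- rewrite e2.
  have -> : y + c * (4 * q) - y = c * (4 * q) by ring.
  by apply: dvdz_mull; apply: dvdzz.
Qed.

Lemma padic_proof (p : nat) (a : nat -> int)
  (h : forall k, (((p ^ k)%N)%:Z %| a k.+1 - a k)%Z) :
  forall k : nat, (a k.+1 = a k %[mod ((p ^ k)%N)%:Z])%Z.
Proof. by move=> k; apply/eqP; rewrite eqz_mod_dvd. Qed.

Definition mkp (p : nat) (a : nat -> int) h : padic_int p :=
  exist _ a (@padic_proof p a h).

Lemma point_gen (p : nat) (d : int) (X Y Z : nat -> int) :
  (forall k, (((p ^ k)%N)%:Z %| X k.+1 - X k)%Z) ->
  (forall k, (((p ^ k)%N)%:Z %| Y k.+1 - Y k)%Z) ->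
  (forall k, (((p ^ k)%N)%:Z %| Z k.+1 - Z k)%Z) ->
  ~~ ((p%:Z %| X 1%N)%Z && (p%:Z %| Z 1%N)%Z) ->
  (forall k, (((p ^ k)%N)%:Z %| d * Y k ^+ 2 - quartF (X k) (Z k))%Z) ->
  has_Qp_point d p.
Proof.
move=> hX hY hZ hnd heq.
exists (mkp hX), (mkp hY), (mkp hZ); split => //= k.
by apply/eqP; rewrite eqz_mod_dvd.
Qed.

Lemma const_compat (p : nat) (c : int) k : (((p ^ k)%N)%:Z %| c - c)%Z.
Proof. by rewrite subrr dvdz0. Qed.

Lemma point_sq (p : nat) (d X0 Z0 c B : int) (y : nat -> int) :
  ~~ ((p%:Z %| X0)%Z && (p%:Z %| Z0)%Z) -> quartF X0 Z0 = c ^+ 2 * B ->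
  (forall k, (((p ^ k)%N)%:Z %| d * y k ^+ 2 - B)%Z /\ (((p ^ k)%N)%:Z %| y k.+1 - y k)%Z) ->
  has_Qp_point d p.
Proof.
move=> hnd hF hy.
apply: (@point_gen p d (fun _ => X0) (fun k => c * y k) (fun _ => Z0)) => //.
- move=> k; exact: const_compat.
- move=> k; rewrite -mulrBr; apply: dvdz_mull; exact: (proj2 (hy k)).
- move=> k; exact: const_compat.
- move=> k; rewrite hF.
  have -> : d * (c * y k) ^+ 2 - c ^+ 2 * B = c ^+ 2 * (d * y k ^+ 2 - B) by ring.
  apply: dvdz_mull; exact: (proj1 (hy k)).
Qed.

Lemma point_root (p : nat) (d : int) (x : nat -> int) : prime p ->
  (forall k, (((p ^ k)%N)%:Z %| x k ^+ 2 - x k - 3)%Z /\ (((p ^ k)%N)%:Z %| x k.+1 - x k)%Z) ->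
  has_Qp_point d p.
Proof.
move=> pp hx.
apply: (@point_gen p d x (fun _ => 0) (fun _ => 1)).
- move=> k; exact: (proj2 (hx k)).
- move=> k; exact: const_compat.
- move=> k; exact: const_compat.
- have p1 : (p != 1)%N by apply: contraTneq pp => ->.
  by rewrite dvdz1 /= (negbTE p1) andbF.
- move=> k; rewrite /quartF.
  have -> : d * 0 ^+ 2 - (x k ^+ 2 - x k * 1 - 3 * 1 ^+ 2) * (x k ^+ 2 + 2 * x k * 1 - 12 * 1 ^+ 2)
     = (x k ^+ 2 - x k - 3) * (- (x k ^+ 2 + 2 * x k - 12)) by ring.
  apply: dvdz_mulr; exact: (proj1 (hx k)).
Qed.

Lemma dvd_pow_le (P : int) m n : (m <= n)%N -> (P ^+ n %| 0)%Z -> True.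
Proof. by []. Qed.

Lemma sol_odd (p : nat) (A B y0 : int) : prime p ->
  (p%:Z %| A * y0 ^+ 2 - B)%Z -> ~~ (p%:Z %| 2 * A * y0)%Z ->
  exists y : nat -> int, forall k,
   (((p ^ k)%N)%:Z %| A * y k ^+ 2 - B)%Z /\ (((p ^ k)%N)%:Z %| y k.+1 - y k)%Z.
Proof.
move=> pp h0 h1.
have [||a ha] := @hensel p A 0 (- B) y0 pp.
- by rewrite mul0r addr0.
- by rewrite addr0.
exists a => k; rewrite PoszXn; have [[h2 _] h3] := ha k.
split; apply: dvdz_trans (dvdz_exp2l _ (leqnSn k)) _ => //.
by move: h2; rewrite mul0r addr0.
Qed.

Lemma sol_root (p : nat) (x0 : int) : prime p ->
  (p%:Z %| x0 ^+ 2 - x0 - 3)%Z -> ~~ (p%:Z %| 2 * x0 - 1)%Z ->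
  exists x : nat -> int, forall k,
   (((p ^ k)%N)%:Z %| x k ^+ 2 - x k - 3)%Z /\ (((p ^ k)%N)%:Z %| x k.+1 - x k)%Z.
Proof.
move=> pp h0 h1.
have [||a ha] := @hensel p 1 (-1) (- 3) x0 pp.
- by rewrite ?mul1r ?mulN1r ?addrA.
- by rewrite ?mulr1 ?mulN1r ?addrA.
exists a => k; rewrite PoszXn; have [[h2 _] h3] := ha k.
split; apply: dvdz_trans (dvdz_exp2l _ (leqnSn k)) _ => //.
by move: h2; rewrite ?mul1r ?mulN1r ?addrA.
Qed.

Lemma sol_two (A B : int) : ~~ (2 %| A)%Z -> (8 %| A - B)%Z ->
  exists y : nat -> int, forall k,
   (((2 ^ k)%N)%:Z %| A * y k ^+ 2 - B)%Z /\ (((2 ^ k)%N)%:Z %| y k.+1 - y k)%Z.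
Proof.
move=> h0 h1.
have [a ha] := hensel2 h0 h1.
exists a => k; rewrite PoszXn; have [[h2 _] h3] := ha k.
split.
  by apply: dvdz_trans h2; apply: dvdz_exp2l; lia.
by apply: dvdz_trans h3; apply: dvdz_exp2l; lia.
Qed.


Lemma ex_iota n (P : pred nat) : [exists x : 'I_n, P x] = has P (iota 0 n).
Proof.
apply/existsP/hasP => [[x Px]|[x]]; first by exists (val x); rewrite ?mem_iota /=.
by rewrite mem_iota add0n => xn Px; exists (Ordinal xn).
Qed.

Lemma legendre_chi (n : nat) : legendre n%:Z 13 = chi13 n.
Proof.
rewrite /legendre /chi13.
have -> : (13%:Z %| n%:Z)%Z = (n %% 13 == 0)%N by rewrite dvdzE /= /dvdn.
have -> : [exists x : 'I_13, ((x%:Z) ^+ 2 == n%:Z %[mod 13%:Z])%Z] =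
          [exists x : 'I_13, ((x * x) %% 13 == n %% 13)%N].
  apply: eq_existsb => x.
  by rewrite expr2 -PoszM !modz_nat.
rewrite (ex_iota 13 (fun x => (x * x) %% 13 == n %% 13)%N).
have : (n %% 13 < 13)%N by rewrite ltn_mod.
move: (n %% 13)%N => r.
by do 13! (case: r => [_|r]; [by []|]).
Qed.

Definition chiL : seq int := [:: 0; 1; -1; 1; 1; -1; -1; -1; -1; 1; 1; -1; 1].

Lemma chi13M m n : chi13 (m * n) = chi13 m * chi13 n.
Proof.
rewrite /chi13 -modnMm.
have key : all (fun a => all (fun b => nth 0 chiL ((a * b) %% 13) == nth 0 chiL a * nth 0 chiL b)
   (iota 0 13)) (iota 0 13) by vm_compute.
have ha : (m %% 13)%N \in iota 0 13 by rewrite mem_iota ltn_mod.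
have hb : (n %% 13)%N \in iota 0 13 by rewrite mem_iota ltn_mod.
by move/allP: key => /(_ _ ha) /allP /(_ _ hb) /eqP.
Qed.

Definition chk8 : bool :=
  all (fun x => all (fun y => all (fun z =>
    ((x %% 2 != 0) || (z %% 2 != 0))%N ==>
    ~~ (8 %| 2 * (y%:Z) ^+ 2 - quartF x%:Z z%:Z)%Z && ~~ (8 %| 6 * (y%:Z) ^+ 2 - quartF x%:Z z%:Z)%Z)
    (iota 0 8)) (iota 0 8)) (iota 0 8).

Lemma chk8_true : all (fun x => all (fun y => all (fun z =>
    ((x %% 2 != 0) || (z %% 2 != 0))%N ==>
    ~~ (8 %| 2 * (y%:Z) ^+ 2 - quartF x%:Z z%:Z)%Z && ~~ (8 %| 6 * (y%:Z) ^+ 2 - quartF x%:Z z%:Z)%Z)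
    (iota 0 8)) (iota 0 8)) (iota 0 8).
Proof. by vm_compute. Qed.

Lemma congD (m a a' b b' : int) : (m %| a - a')%Z -> (m %| b - b')%Z -> (m %| (a + b) - (a' + b'))%Z.
Proof.
move=> h1 h2; have -> : a + b - (a' + b') = (a - a') + (b - b') by ring.
exact: rpredD.
Qed.
Lemma congN (m a a' : int) : (m %| a - a')%Z -> (m %| - a - - a')%Z.
Proof. by move=> h; rewrite (_ : - a - - a' = - (a - a')) ?rpredN //; ring. Qed.
Lemma congM (m a a' b b' : int) : (m %| a - a')%Z -> (m %| b - b')%Z -> (m %| a * b - a' * b')%Z.
Proof.
move=> h1 h2; have -> : a * b - a' * b' = (a - a') * b + a' * (b - b') by ring.
by apply: rpredD; [apply: dvdz_mulr | apply: dvdz_mull].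
Qed.
Lemma congX2 (m a a' : int) : (m %| a - a')%Z -> (m %| a ^+ 2 - a' ^+ 2)%Z.
Proof. by move=> h; rewrite !expr2; apply: congM. Qed.
Lemma congC (m c : int) : (m %| c - c)%Z.
Proof. by rewrite subrr dvdz0. Qed.


Lemma cong_quartF (m X Z X' Z' : int) : (m %| X - X')%Z -> (m %| Z - Z')%Z ->
  (m %| quartF X Z - quartF X' Z')%Z.
Proof.
move=> hX hZ; rewrite /quartF.
apply: congM; apply: congD.
- apply: congD; [exact: congX2 | by apply: congN; apply: congM].
- by apply: congN; apply: congM; [exact: congC | exact: congX2].
- apply: congD; [exact: congX2 | by apply: congM; [apply: congM; [exact: congC|]|]].
- by apply: congN; apply: congM; [exact: congC | exact: congX2].
Qed.

Lemma res8 (a : int) : exists r : nat, (r < 8)%N /\ (8 %| a - r%:Z)%Z.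
Proof. exists (absz (a %% 8)%Z); lia. Qed.

Lemma padic_cong (p : nat) (X : padic_int p) k :
  (((p ^ k)%N)%:Z %| sval X k.+1 - sval X k)%Z.
Proof. by rewrite -eqz_mod_dvd; apply/eqP; exact: (proj2_sig X k). Qed.

Lemma par8 (X1 X2 X3 : int) (x : nat) : (2 %| X2 - X1)%Z -> (4 %| X3 - X2)%Z -> (8 %| X3 - x%:Z)%Z ->
   (2 %| X1)%Z = (x %% 2 == 0)%N.
Proof. move=> *; lia. Qed.
Lemma dd8 (d : int) (dd : nat) : (2 %| d)%Z -> ~~ (4 %| d)%Z -> (dd < 8)%N -> (8 %| d - dd%:Z)%Z -> dd = 2%N \/ dd = 6%N.
Proof. move=> *; lia. Qed.

Lemma no_point_2 (d : int) : (2 %| d)%Z -> ~~ (4 %| d)%Z -> ~ has_Qp_point d 2.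
Proof.
move=> h2 h4 [X [Y [Z [hnd heq]]]].
have e3 := heq 3%N; move/eqP: e3; rewrite eqz_mod_dvd => e3.
have X21 := padic_cong X 1; have X32 := padic_cong X 2.
have Z21 := padic_cong Z 1; have Z32 := padic_cong Z 2.
have [x [x8 hx]] := res8 (sval X 3%N).
have [y [y8 hy]] := res8 (sval Y 3%N).
have [z [z8 hz]] := res8 (sval Z 3%N).
have [dd [d8 hd]] := res8 d.
have hc : (8 %| dd%:Z * y%:Z ^+ 2 - quartF x%:Z z%:Z)%Z.
  have : (8 %| (d * sval Y 3%N ^+ 2 - quartF (sval X 3%N) (sval Z 3%N)) -
               (dd%:Z * y%:Z ^+ 2 - quartF x%:Z z%:Z))%Z.
    apply: congD; first by apply: congM; [exact: hd | exact: congX2].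
    by apply: congN; apply: cong_quartF.
  move: e3; rewrite /= => e3 h.
  have -> : dd%:Z * y%:Z ^+ 2 - quartF x%:Z z%:Z =
    (d * sval Y 3%N ^+ 2 - quartF (sval X 3%N) (sval Z 3%N)) -
    ((d * sval Y 3%N ^+ 2 - quartF (sval X 3%N) (sval Z 3%N)) -
               (dd%:Z * y%:Z ^+ 2 - quartF x%:Z z%:Z)) by ring.
  by apply: rpredB.
have e1 : ((2 ^ 1)%N)%:Z = 2 by [].
have e2 : ((2 ^ 2)%N)%:Z = 4 by [].
rewrite e1 in X21 Z21; rewrite e2 in X32 Z32.
have par : ((x %% 2 != 0) || (z %% 2 != 0))%N.
  move: hnd; rewrite (par8 X21 X32 hx) (par8 Z21 Z32 hz).
  by case: (x %% 2 == 0)%N; case: (z %% 2 == 0)%N.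
have ddc := dd8 h2 h4 d8 hd.
have xi : (x \in iota 0 8) by rewrite mem_iota /= x8.
have yi : (y \in iota 0 8) by rewrite mem_iota /= y8.
have zi : (z \in iota 0 8) by rewrite mem_iota /= z8.
have H0 := chk8_true.
have H1 := allP H0 x xi.
have H2 := allP H1 y yi.
have H3 := allP H2 z zi.
move: H3; rewrite par implyTb => /andP[n2 n6].
by case: ddc => e; rewrite e in hc; [rewrite hc in n2 | rewrite hc in n6].
Qed.


Lemma Fp_dvd (p : nat) (x : int) : prime p -> (p%:Z %| x)%Z = (x%:~R == 0 :> 'F_p).
Proof. by move=> pp; rewrite (dvdz_pcharf (pchar_Fp pp)). Qed.

Lemma Fp_lift (p : nat) (s : 'F_p) : prime p -> exists y : int, y%:~R = s.
Proof. by move=> pp; exists (val s)%:Z; rewrite -pmulrn natr_Zp. Qed.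

Lemma quartF_intr (R : comNzRingType) (X Z : int) :
  (quartF X Z)%:~R = quartF (X%:~R : R) Z%:~R.
Proof. by rewrite /quartF !(rmorphM, rmorphB, rmorphD, rmorphXn, rmorph_nat). Qed.

Lemma no_point_odd (p : nat) (d : int) : prime p -> (p%:Z %| d)%Z ->
  ~ (exists s : 'F_p, s ^+ 2 = 13) -> ~ has_Qp_point d p.
Proof.
move=> pp pd nsq [X [Y [Z [hnd heq]]]].
have e1 := heq 1%N; move/eqP: e1; rewrite eqz_mod_dvd expn1 Fp_dvd //.
rewrite rmorphB rmorphM /= rmorphXn /= quartF_intr.
move: pd hnd; rewrite !Fp_dvd // => /eqP -> hnd.
set x : 'F_p := (sval X 1%N)%:~R; set z : 'F_p := (sval Z 1%N)%:~R.
rewrite mul0r sub0r oppr_eq0 /quartF mulf_eq0 => hq.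
have [z0|z0] := eqVneq z 0.
  move: hnd hq; rewrite -/x -/z z0 eqxx andbT => hx.
  rewrite !mulr0 expr0n /= !mulr0 !subr0 !addr0 orbb expf_eq0 /=.
  by rewrite (negbTE hx).
apply: nsq; case/orP: hq => /eqP hq.
  exists ((2 * x - z) / z).
  apply/eqP; rewrite -subr_eq0.
  have -> : ((2 * x - z) / z) ^+ 2 - 13 = 4 * (x ^+ 2 - x * z - 3 * z ^+ 2) / z ^+ 2.
    by field.
  by rewrite hq mulr0 mul0r.
exists ((x + z) / z).
apply/eqP; rewrite -subr_eq0.
have -> : ((x + z) / z) ^+ 2 - 13 = (x ^+ 2 + 2 * x * z - 12 * z ^+ 2) / z ^+ 2.
  by field.
by rewrite hq mul0r.
Qed.

Lemma two_neq0 (p : nat) : prime p -> odd p -> (2 : 'F_p) != 0.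
Proof.
move=> pp po; rewrite -(dvdn_pcharf (pchar_Fp pp) 2) dvdn_prime2 //.
by apply/eqP => e; move: po; rewrite e.
Qed.

Lemma thirteen_neq0 (p : nat) : prime p -> p != 13%N -> (13 : 'F_p) != 0.
Proof. by move=> pp p13; rewrite -(dvdn_pcharf (pchar_Fp pp) 13) dvdn_prime2 // (negbTE p13). Qed.

Lemma exist_root_case (p : nat) (d : int) : prime p -> odd p -> p != 13%N ->
  (exists s : 'F_p, s ^+ 2 = 13) -> has_Qp_point d p.
Proof.
move=> pp po p13 [s hs].
have h2 := two_neq0 pp po.
have h4 : (4 : 'F_p) != 0.
  by rewrite (_ : (4 : 'F_p) = 2 * 2) ?mulf_neq0 //; ring.
have s0 : s != 0.
  by apply: contraTneq (thirteen_neq0 pp p13) => e; rewrite -hs e expr0n.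
have [x0 hx0] := Fp_lift ((1 + s) / 2) pp.
have [||x hx] := @sol_root p x0 pp.
- rewrite Fp_dvd // !rmorphB /= rmorphXn /= hx0.
  apply/eqP; have -> : ((1 + s) / 2) ^+ 2 - (1 + s) / 2 - 3%:~R = (s ^+ 2 - 13) / 4.
    by rewrite -pmulrn; field; rewrite h2 h4.
  by rewrite hs subrr mul0r.
- rewrite Fp_dvd // rmorphB rmorphM /= hx0.
  have -> : 2%:~R * ((1 + s) / 2) - 1%:~R = s :> 'F_p.
    by rewrite -!pmulrn; field; rewrite ?h2.
  exact: s0.
exact: (point_root d pp hx).
Qed.

Lemma not_dvd1 (p : nat) : prime p -> ~~ (p%:Z %| 1)%Z.
Proof.
move=> pp; have p1 : (p != 1)%N by apply: contraTneq pp => ->.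
by rewrite dvdz1 /= p1.
Qed.

Lemma exist_unit_case (p : nat) (d : int) : prime p -> odd p -> p != 13%N ->
  ~~ (p%:Z %| d)%Z -> has_Qp_point d p.
Proof.
move=> pp po p13 pd.
have hd : (d%:~R : 'F_p) != 0 by rewrite -Fp_dvd.
have Fo := Fp_odd pp po.
have h13 := thirteen_neq0 pp p13.
have h2 := two_neq0 pp po.
set D : 'F_p := d%:~R in hd.
have [/existsP[s /eqP hs]|ns1] := boolP [exists s : 'F_p, s ^+ 2 == D].
  have s0 : s != 0 by apply: contraTneq hd => e; rewrite -hs e expr0n.
  have [y0 hy0] := Fp_lift s^-1 pp.
  have [||y hy] := @sol_odd p d 1 y0 pp.
  - rewrite Fp_dvd // rmorphB rmorphM rmorphXn /= hy0 -/D -hs -pmulrn.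
    by apply/eqP; field.
  - rewrite Fp_dvd // !rmorphM /= hy0 -/D -hs -pmulrn.
    have -> : 2%:R * s ^+ 2 * s^-1 = 2 * s by field.
    by rewrite mulf_neq0.
  apply: (@point_sq p d 1 0 1 1 y).
  - by rewrite (negbTE (not_dvd1 pp)).
  - by rewrite /quartF; ring.
  - exact: hy.
have [/existsP[s /eqP hs]|ns2] := boolP [exists s : 'F_p, s ^+ 2 == 13 * D].
  have s0 : s != 0 by apply: contraTneq (mulf_neq0 h13 hd) => e; rewrite -hs e expr0n.
  have [y0 hy0] := Fp_lift (s / D) pp.
  have [||y hy] := @sol_odd p d 13 y0 pp.
  - rewrite Fp_dvd // rmorphB rmorphM rmorphXn /= hy0 -/D -pmulrn.
    have -> : D * (s / D) ^+ 2 - 13%:R = (s ^+ 2 - 13 * D) / D by field.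
    by rewrite hs subrr mul0r.
  - rewrite Fp_dvd // !rmorphM /= hy0 -/D -pmulrn.
    have -> : 2%:R * D * (s / D) = 2 * s by field.
    by rewrite mulf_neq0.
  apply: (@point_sq p d (-1) 1 1 13 y).
  - by rewrite (negbTE (not_dvd1 pp)) andbF.
  - by rewrite /quartF; ring.
  - exact: hy.
apply: (exist_root_case d pp po p13).
have nsq : forall a : 'F_p, a != 0 -> ~~ [exists s : 'F_p, s ^+ 2 == a] -> a ^+ (#|'F_p|./2) = -1.
  move=> a a0 na; case: (euler_pm Fo a0) => // ha.
  case/negP: na; have [s hs] := euler_hard Fo a0 ha.
  by apply/existsP; exists s; rewrite hs.
have e1 := nsq D hd ns1.
have e2 := nsq (13 * D) (mulf_neq0 h13 hd) ns2.
apply: (euler_hard Fo h13).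
move: e2; rewrite exprMn e1 mulrN1 => e2.
exact: oppr_inj e2.
Qed.


Lemma real_point (d : int) : d != 0 -> has_real_point d.
Proof.
move=> d0 R.
set D : R := d%:~R.
have D0 : D != 0 by rewrite intr_eq0.
have [Dpos|Dneg] := ltrP 0 D.
  exists 1, (Num.sqrt D)^-1, 0; split; first by left; exact: oner_neq0.
  have sq : Num.sqrt D ^+ 2 = D by rewrite sqr_sqrtr // ltW.
  rewrite exprVn sq mulfV //; rewrite /quartF; ring.
have Dn : 0 <= - D by rewrite oppr_ge0.
have sq : Num.sqrt (- D) ^+ 2 = - D by rewrite sqr_sqrtr.
have sD0 : Num.sqrt (- D) != 0.
  have Dlt : D < 0 by rewrite lt_neqAle D0 Dneg.
  by rewrite sqrtr_eq0 -ltNge oppr_gt0.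
exists (-2), (6 / Num.sqrt (- D)), 1; split; first by right; exact: oner_neq0.
rewrite expr_div_n sq.
have -> : D * (6 ^+ 2 / - D) = - 36 by field.
rewrite /quartF; ring.
Qed.

Lemma exist_two (d : int) : ~~ (2 %| d)%Z -> has_Qp_point d 2.
Proof.
move=> hd.
have : (8 %| d - 1)%Z \/ (8 %| d - 3)%Z \/ (8 %| d - 13)%Z \/ (8 %| d - (-1))%Z.
  by move: hd; lia.
case=> [h8|[h8|[h8|h8]]].
- have [y hy] := sol_two hd h8.
  apply: (@point_sq 2 d 1 0 1 1 y) => //; rewrite /quartF; ring.
- have [y hy] := sol_two hd h8.
  apply: (@point_sq 2 d 1 1 3 3 y) => //; rewrite /quartF; ring.
- have [y hy] := sol_two hd h8.
  apply: (@point_sq 2 d (-1) 1 1 13 y) => //; rewrite /quartF; ring.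
- have [y hy] := sol_two hd h8.
  apply: (@point_sq 2 d (-2) 1 6 (-1) y) => //; rewrite /quartF; ring.
Qed.

Lemma sq13_witness (A : int) : chi13 (absz A) = 1 ->
  exists y0 : int, (13 %| A * y0 ^+ 2 - 1)%Z /\ ~~ (13 %| 2 * A * y0)%Z.
Proof.
rewrite /chi13.
have hr : (absz A %% 13 < 13)%N by rewrite ltn_mod.
have [Ap|An] : (0 <= A) \/ (A < 0) by lia.
- move: hr; move Er : (absz A %% 13)%N => r hr.
  case: (eqVneq r 0%N) => [e|?]; first by rewrite e in Er *; by [].
  case: (eqVneq r 1%N) => [e|?]; first by rewrite e in Er *; by move=> _; exists 1; rewrite expr2; lia.
  case: (eqVneq r 2%N) => [e|?]; first by rewrite e in Er *; by [].
  case: (eqVneq r 3%N) => [e|?]; first by rewrite e in Er *; by move=> _; exists 3; rewrite expr2; lia.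
  case: (eqVneq r 4%N) => [e|?]; first by rewrite e in Er *; by move=> _; exists 6; rewrite expr2; lia.
  case: (eqVneq r 5%N) => [e|?]; first by rewrite e in Er *; by [].
  case: (eqVneq r 6%N) => [e|?]; first by rewrite e in Er *; by [].
  case: (eqVneq r 7%N) => [e|?]; first by rewrite e in Er *; by [].
  case: (eqVneq r 8%N) => [e|?]; first by rewrite e in Er *; by [].
  case: (eqVneq r 9%N) => [e|?]; first by rewrite e in Er *; by move=> _; exists 4; rewrite expr2; lia.
  case: (eqVneq r 10%N) => [e|?]; first by rewrite e in Er *; by move=> _; exists 2; rewrite expr2; lia.
  case: (eqVneq r 11%N) => [e|?]; first by rewrite e in Er *; by [].
  case: (eqVneq r 12%N) => [e|?]; first by rewrite e in Er *; by move=> _; exists 5; rewrite expr2; lia.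
  by lia.
- move: hr; move Er : (absz A %% 13)%N => r hr.
  case: (eqVneq r 0%N) => [e|?]; first by rewrite e in Er *; by [].
  case: (eqVneq r 1%N) => [e|?]; first by rewrite e in Er *; by move=> _; exists 5; rewrite expr2; lia.
  case: (eqVneq r 2%N) => [e|?]; first by rewrite e in Er *; by [].
  case: (eqVneq r 3%N) => [e|?]; first by rewrite e in Er *; by move=> _; exists 2; rewrite expr2; lia.
  case: (eqVneq r 4%N) => [e|?]; first by rewrite e in Er *; by move=> _; exists 4; rewrite expr2; lia.
  case: (eqVneq r 5%N) => [e|?]; first by rewrite e in Er *; by [].
  case: (eqVneq r 6%N) => [e|?]; first by rewrite e in Er *; by [].
  case: (eqVneq r 7%N) => [e|?]; first by rewrite e in Er *; by [].
  case: (eqVneq r 8%N) => [e|?]; first by rewrite e in Er *; by [].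
  case: (eqVneq r 9%N) => [e|?]; first by rewrite e in Er *; by move=> _; exists 7; rewrite expr2; lia.
  case: (eqVneq r 10%N) => [e|?]; first by rewrite e in Er *; by move=> _; exists 10; rewrite expr2; lia.
  case: (eqVneq r 11%N) => [e|?]; first by rewrite e in Er *; by [].
  case: (eqVneq r 12%N) => [e|?]; first by rewrite e in Er *; by move=> _; exists 12; rewrite expr2; lia.
  by lia.
Qed.

Lemma chi13_prod n : (0 < n)%N -> (forall q, prime q -> (q %| n)%N -> chi13 q = 1) -> chi13 n = 1.
Proof.
elim: n {-2}n (leqnn n) => [|N IH] n hn n0 H; first by move: n0; rewrite lt0n -leqn0 hn.
have [n1|n1] := leqP n 1.
  by have -> : n = 1%N by apply/eqP; rewrite eqn_leq n1.
have qp := pdiv_prime n1.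
have qd := pdiv_dvd n.
have q1 : (1 < pdiv n)%N by rewrite prime_gt1.
rewrite -(divnK qd) chi13M (H _ qp qd) mulr1.
have lt := ltn_Pdiv q1 n0.
have m0 : (0 < n %/ pdiv n)%N by rewrite divn_gt0 ?prime_gt0 // dvdn_leq.
apply: IH => //.
  by rewrite -ltnS (leq_trans _ hn) // ltnS.
by move=> q pq qm; apply: H => //; rewrite -(divnK qd); exact: dvdn_mulr.
Qed.

Lemma exist_13A (d : int) : chi13 (absz d) = 1 -> has_Qp_point d 13.
Proof.
move=> hc.
have [y0 [h1 h2]] := sq13_witness hc.
have [||y hy] := @sol_odd 13 d 1 y0 (isT : prime 13).
- exact: h1.
- exact: h2.
apply: (@point_sq 13 d 1 0 1 1 y).
- by [].
- by rewrite /quartF; ring.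
- exact: hy.
Qed.

Lemma exist_13B (e : int) : chi13 (absz e) = 1 -> has_Qp_point (e * 13) 13.
Proof.
move=> hc.
have [y0 [h1 h2]] := sq13_witness hc.
have [||y hy] := @sol_odd 13 e 1 y0 (isT : prime 13).
- exact: h1.
- exact: h2.
apply: (@point_sq 13 (e * 13) (-1) 1 1 13 y).
- by [].
- by rewrite /quartF; ring.
- move=> k; have [a b] := hy k; split => //.
  have -> : e * 13 * y k ^+ 2 - 13 = 13 * (e * y k ^+ 2 - 1) by ring.
  exact: dvdz_mull.
Qed.


Unset Implicit Arguments.

Theorem mainTheorem4 (d : int) (hd : squarefree_int d) :
  everywhere_locally_solvable d <->
  (forall p : nat, prime p -> (p %| `|d|)%N -> legendre p%:Z 13 = 1 \/ p = 13%N).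
Proof.
have [d0 hsq] := hd.
have pdE : forall p : nat, (p %| `|d|)%N = (p%:Z %| d)%Z by move=> p; rewrite dvdzE.
split.
- move=> [_ hP] p pp pdv; rewrite legendre_chi.
  have [->|p13] := eqVneq p 13%N; first by right.
  left; case: (eqVneq (chi13 p) 1) => // hc; exfalso.
  have pdz : (p%:Z %| d)%Z by rewrite -pdE.
  case: (even_prime pp) => [p2|po].
    subst p; apply: (@no_point_2 d pdz _ (hP 2%N pp)).
    exact: (hsq 2%N pp).
  apply: (@no_point_odd p d pp pdz _ (hP p pp)).
  by move/(sq13_iff pp p13 po)/eqP; rewrite (negbTE hc).
- move=> H; split; first exact: real_point.
  have chiH : forall q, prime q -> (q %| `|d|)%N -> q != 13%N -> chi13 q = 1.
    move=> q qp qd q13; case: (H q qp qd) => [|e]; first by rewrite legendre_chi.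
    by rewrite e eqxx in q13.
  move=> p pp.
  case: (even_prime pp) => [p2|po].
    subst p; apply: exist_two; rewrite -pdE; apply/negP => h2.
    by have := chiH 2%N pp h2 isT.
  have [p13|p13] := eqVneq p 13%N.
    subst p.
    have [/dvdzP[e de]|n13] := boolP (13%:Z %| d)%Z.
      have n13 : ~~ (13%:Z %| e)%Z.
        apply/negP => /dvdzP[f ef]; have := hsq 13%N pp.
        by rewrite de ef -mulrA; move/negP; apply; apply: dvdz_mull; apply: dvdzz.
      have e0 : e != 0 by apply: contraNneq d0 => e0; rewrite de e0 mul0r.
      rewrite de; apply: exist_13B; apply: chi13_prod.
        by rewrite absz_gt0.
      move=> q qp qe; apply: chiH => //.
        by rewrite de abszM dvdn_mulr.
      by apply: contraNneq n13 => q13; rewrite dvdzE /= -q13.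
    apply: exist_13A; apply: chi13_prod; first by rewrite absz_gt0.
    move=> q qp qe; apply: chiH => //.
    by apply: contraNneq n13 => q13; rewrite dvdzE /= -q13.
  have [pdv|npd] := boolP (p%:Z %| d)%Z.
    apply: (exist_root_case d pp po p13).
    by apply/(sq13_iff pp p13 po); apply: chiH => //; rewrite pdE.
  exact: exist_unit_case.
Qed.
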